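(* For every integer $n>1$, the aura $\mathbb{R}_+^{[n]}$ is archimedean but does not have tempered growth.
   Context: A halo is a commutative unital semiring with a partial order compatible with $+$ and $\cdot$; an aura is a halo whose semiring is a semifield; positive means $0<1$. For positive auras $R_1,\dots,R_n$, the lexicographic product $[\prod]R_i$ is the set $\{0\}\cup\prod_i R_i^\times$ (where $R_i^\times=R_i\setminus\{0\}$ and $0$ is identified with $(0,\dots,0)$), with componentwise addition and multiplication and the lexicographic order (first coordinate most significant); $\mathbb{R}_+^{[n]}$ denotes the lexicographic product of $n$ copies of $\mathbb{R}_+$ (usual operations and order). A positive halo $A$ is archimedean if $A$ is not reduced to $\{0,1\}$ and for all $x>y>0$ there is $m\in\mathbb{N}$ with $my>x$. A halo $R$ has tempered growth if for every non-zero $P\in\mathbb{N}[X]$ and $x\in R$, ($x^m\le P(m)$ for all $m\in\mathbb{N}$) implies $x\le1$, natural numbers being interpreted as sums of $1$. *)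

(* Defs.v *)
From Stdlib Require Import Reals List.
Import ListNotations.
Open Scope R_scope.

(** Generic data of a (candidate) halo: a carrier type with a membership
    predicate (the actual underlying set), 0, 1, +, *, and a partial order <=. *)
Record halo_data := HaloData {
  car : Type;
  hmem : car -> Prop;
  hzero : car;
  hone : car;
  hadd : car -> car -> car;
  hmul : car -> car -> car;
  hle : car -> car -> Prop
}.

Definition hlt (H : halo_data) (x y : car H) : Prop := hle H x y /\ x <> y.

Definition hnat (H : halo_data) (m : nat) : car H := Nat.iter m (hadd H (hone H)) (hzero H).

Definition hnsmul (H : halo_data) (m : nat) (y : car H) : car H := Nat.iter m (hadd H y) (hzero H).

Definition hpow (H : halo_data) (x : car H) (m : nat) : car H := Nat.iter m (hmul H x) (hone H).

Definition positive_halo (H : halo_data) : Prop := hlt H (hzero H) (hone H).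

Definition archimedean (H : halo_data) : Prop :=
  positive_halo H /\
  (exists z, hmem H z /\ z <> hzero H /\ z <> hone H) /\
  (forall x y, hmem H x -> hmem H y -> hlt H y x -> hlt H (hzero H) y ->
     exists m : nat, hlt H x (hnsmul H m y)).

(** Polynomials in N[X] as coefficient lists (constant term first). *)
Definition natpoly := list nat.
Definition natpoly_nonzero (P : natpoly) : Prop := exists c, In c P /\ c <> 0%nat.
Definition natpoly_eval (P : natpoly) (m : nat) : nat :=
  fold_right (fun c acc => (c + m * acc)%nat) 0%nat P.

Definition tempered_growth (H : halo_data) : Prop :=
  forall (P : natpoly) (x : car H), natpoly_nonzero P -> hmem H x ->
    (forall m : nat, hle H (hpow H x m) (hnat H (natpoly_eval P m))) ->
    hle H x (hone H).

(** The lexicographic product R_+^[n].  Elements: None = 0, Some v with v a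
    list of n positive reals (the first coordinate is the most significant). *)
Fixpoint lex_le (a b : list R) : Prop :=
  match a, b with
  | [], [] => True
  | x :: a', y :: b' => x < y \/ (x = y /\ lex_le a' b')
  | _, _ => False
  end.

Definition lexR_mem (n : nat) (x : option (list R)) : Prop :=
  match x with
  | None => True
  | Some v => length v = n /\ Forall (fun t => 0 < t) v
  end.

Definition lexR_add (x y : option (list R)) : option (list R) :=
  match x, y with
  | None, _ => y
  | _, None => x
  | Some a, Some b => Some (map (fun p => fst p + snd p) (combine a b))
  end.

Definition lexR_mul (x y : option (list R)) : option (list R) :=
  match x, y with
  | Some a, Some b => Some (map (fun p => fst p * snd p) (combine a b))
  | _, _ => None
  end.

Definition lexR_le (x y : option (list R)) : Prop :=
  match x, y with
  | None, _ => True
  | Some _, None => False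
  | Some a, Some b => lex_le a b
  end.

Definition lexR (n : nat) : halo_data :=
  {| car := option (list R);
     hmem := lexR_mem n;
     hzero := None;
     hone := Some (repeat 1 n);
     hadd := lexR_add;
     hmul := lexR_mul;
     hle := lexR_le |}.

(* Main.v *)
Require Import Defs.
From Stdlib Require Import Reals List Lra.
Import ListNotations.
Open Scope R_scope.

Lemma comb_map (f : R -> R) (b : list R) :
  map (fun p => fst p + snd p) (combine b (map f b)) = map (fun t => t + f t) b.
Proof. induction b; simpl; [reflexivity | now rewrite IHb]. Qed.

Lemma nsmul_eq n (b : list R) (m : nat) :
  hnsmul (lexR n) (S m) (Some b) = Some (map (fun t => INR (S m) * t) b).
Proof.
  induction m.
  - simpl. f_equal. induction b; simpl; [reflexivity|]. rewrite <- IHb. f_equal; ring.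
  - change (hnsmul (lexR n) (S (S m)) (Some b)) with
      (lexR_add (Some b) (hnsmul (lexR n) (S m) (Some b))).
    rewrite IHm. simpl lexR_add. rewrite comb_map. f_equal.
    apply map_ext. intro t. change (t + INR (S m) * t = INR (S (S m)) * t). rewrite (S_INR (S m)). ring.
Qed.

Lemma pow_first k (m : nat) :
  exists l, hpow (lexR (S (S k))) (Some (1 :: 2 :: repeat 1 k)) m = Some (1 :: l).
Proof.
  induction m.
  - exists (1 :: repeat 1 k). reflexivity.
  - destruct IHm as [l Hl]. change (hpow (lexR (S (S k))) (Some (1 :: 2 :: repeat 1 k)) (S m))
      with (lexR_mul (Some (1 :: 2 :: repeat 1 k)) (hpow (lexR (S (S k))) (Some (1 :: 2 :: repeat 1 k)) m)).
    rewrite Hl. simpl. eexists. f_equal. f_equal. ring.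
Qed.

Theorem lemma1p33 (n : nat) (hn : (1 < n)%nat) :
  archimedean (lexR n) /\ ~ tempered_growth (lexR n).
Proof.
  destruct n as [|[|k]]; [exfalso; inversion hn | exfalso; inversion hn; inversion H0 |].
  clear hn. split.
  - split; [|split].
    + split; [exact I | discriminate].
    + exists (Some (repeat 2 (S (S k)))). split; [|split; [discriminate|]].
      * split; [apply repeat_length|]. apply Forall_forall. intros t Ht.
        apply repeat_spec in Ht. lra.
      * simpl. intro H. injection H. lra.
    + intros x y Hx Hy [Hyx Hneq] [_ Hy0].
      destruct y as [b|]; [|exfalso; now apply Hy0].
      destruct x as [a|]; [|destruct Hyx].
      destruct Hx as [La Pa]. destruct Hy as [Lb Pb].
      destruct a as [|a0 a']; [discriminate|].
      destruct b as [|b0 b']; [discriminate|].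
      inversion Pb as [|? ? Hb0 _]; subst.
      destruct (INR_unbounded (a0 / b0)) as [m Hm].
      exists (S m). rewrite nsmul_eq.
      assert (HS : INR (S m) = INR m + 1) by apply S_INR.
      assert (Hm0 : 0 <= INR m) by apply pos_INR.
      assert (Hlt : a0 < INR (S m) * b0).
      { assert (E : a0 = (a0 / b0) * b0) by (field; lra). rewrite HS. nra. }
      split.
      * cbn [hle lexR lexR_le map lex_le]. left. exact Hlt.
      * intro E. injection E. intros _ E0. change (a0 = INR (S m) * b0) in E0. lra.
  - intro T.
    assert (H := T [2%nat] (Some (1 :: 2 :: repeat 1 k))).
    assert (Hle : lexR_le (Some (1 :: 2 :: repeat 1 k)) (Some (1 :: 1 :: repeat 1 k))).
    { apply H.
      - exists 2%nat. split; [left; reflexivity | discriminate].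
      - split; [simpl; rewrite repeat_length; reflexivity|].
        constructor; [lra|]. constructor; [lra|]. apply Forall_forall.
        intros t Ht. apply repeat_spec in Ht. lra.
      - intro m. destruct (pow_first k m) as [l Hl]. simpl hle. rewrite Hl.
        unfold hnat. simpl natpoly_eval. rewrite Nat.mul_0_r. simpl.
        left. lra. }
    simpl in Hle. lra.
Qed.
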